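(* For $s,s'\in\mathbb C$ define $d_{s,s'}\colon G/M\to\mathbb C$ by $d_{s,s'}(gM)=q^{(\frac12+is)H(g)}q^{(\frac12+is')H(gr)}$. Then for all $g,g'\in G$ and $n\in\mathbb Z$: (i) $d_{s,s'}(g'gM)=q^{(\frac12+is)\langle g'o,g'g\omega_+\rangle}q^{(\frac12+is')\langle g'o,g'g\omega_-\rangle}d_{s,s'}(gM)$; (ii) $d_{s,s'}(g\tau^nM)=q^{n(\frac12+is)}q^{-n(\frac12+is')}d_{s,s'}(gM)$.
   Context: Let $q\ge2$ and $\mathfrak G$ the $(q+1)$-regular tree with vertex set $\mathfrak X$, graph distance $d$ and boundary $\Omega$ (infinite non-backtracking edge chains modulo eventual equality up to shift); $[x,\omega)$ is the ray from $x$ to $\omega$. Fix a vertex $o$ and $\omega_-\neq\omega_+\in\Omega$ with $o$ on the geodesic $]\omega_-,\omega_+[$. $\langle x,\omega\rangle=d(o,y)-d(x,y)$ where $[o,\omega)\cap[x,\omega)=[y,\omega)$. $G=\mathrm{Aut}(\mathfrak G)$, $K=\mathrm{Stab}_G(o)$, $B_{\omega_+}=\{g\in G:g\omega_+=\omega_+,\ g\text{ fixes some vertex}\}$, $\tau\in G$ a fixed automorphism fixing $\omega_\pm$ and translating $]\omega_-,\omega_+[$ one step towards $\omega_+$; each $g\in G$ is $g=kn\tau^j$ with $k\in K,n\in B_{\omega_+}$ and unique $j=:H(g)\in\mathbb Z$. $r\in K$ is fixed with $r^2=\mathrm{id}$, $r\tau^jr^{-1}=\tau^{-j}$. $M=\{\gamma\in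 K:\gamma$ fixes every vertex of $]\omega_-,\omega_+[\}$; $H(g)$ and $H(gr)$ depend only on $gM$. *)

(* Defs.v *)
From Stdlib Require Import Reals ZArith List ClassicalEpsilon.
From Coquelicot Require Import Coquelicot.
Import ListNotations.
Set Implicit Arguments.

Section Tree.
Variable V : Type.
Variable adj : V -> V -> Prop.

Inductive walk : V -> list V -> V -> Prop :=
| walk_nil : forall x, walk x [] x
| walk_cons : forall x z l y, adj x z -> walk z l y -> walk x (z :: l) y.

Definition reduced (s : list V) (d : V) : Prop :=
  forall i, (i + 2 < length s)%nat -> nth i s d <> nth (i + 2) s d.

Definition is_tree : Prop :=
  (forall x y, adj x y -> adj y x) /\
  (forall x, ~ adj x x) /\
  (forall x y, exists l, walk x l y) /\
  (forall x l, walk x l x -> reduced (x :: l) x -> l = []).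

Definition regular (k : nat) : Prop :=
  forall x, exists l, length l = k /\ NoDup l /\ (forall y, adj x y <-> In y l).

Definition is_dist (x y : V) (n : nat) : Prop :=
  (exists l, walk x l y /\ length l = n) /\ (forall l, walk x l y -> (n <= length l)%nat).
Definition dist (x y : V) : nat := epsilon (inhabits 0%nat) (is_dist x y).

Definition ray (u : nat -> V) : Prop :=
  forall n, adj (u n) (u (S n)) /\ u n <> u (S (S n)).
(* boundary points: rays modulo eventual equality up to shift *)
Definition bequiv (u w : nat -> V) : Prop :=
  exists k m, forall n, u (n + k)%nat = w (n + m)%nat.

Definition rayset (x : V) (om : nat -> V) (z : V) : Prop :=
  exists u, ray u /\ u 0%nat = x /\ bequiv u om /\ exists n, u n = z.

(* <x, omega> = d(o,y) - d(x,y) where [o,omega) ∩ [x,omega) = [y,omega) *)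
Definition busemann (o x : V) (om : nat -> V) : Z :=
  epsilon (inhabits 0%Z) (fun b => exists y,
    (forall z, (rayset o om z /\ rayset x om z) <-> rayset y om z) /\
    b = (Z.of_nat (dist o y) - Z.of_nat (dist x y))%Z).

Definition geodesic (gam : Z -> V) : Prop :=
  forall n, adj (gam n) (gam (n + 1)%Z) /\ gam n <> gam (n + 2)%Z.

Definition is_aut (g : V -> V) : Prop :=
  (forall x y, adj x y <-> adj (g x) (g y)) /\
  exists h : V -> V, (forall x, h (g x) = x) /\ (forall x, g (h x) = x).

Definition tpow (tau taui : V -> V) (j : Z) : V -> V :=
  match j with
  | Z0 => fun x => x
  | Zpos p => Nat.iter (Pos.to_nat p) tau
  | Zneg p => Nat.iter (Pos.to_nat p) taui
  end.

(* H(g): the unique j with g = k n tau^j, k in K = Stab(o),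
   n in B_{omega_+} (fixes omega_+ and some vertex) *)
Definition Hproj (o : V) (omp : nat -> V) (tau taui : V -> V) (g : V -> V) : Z :=
  epsilon (inhabits 0%Z) (fun j => exists k n,
    is_aut k /\ k o = o /\
    is_aut n /\ bequiv (fun m => n (omp m)) omp /\ (exists x, n x = x) /\
    forall x, g x = k (n (tpow tau taui j x))).

End Tree.

Definition cexp (z : C) : C := (exp (fst z) * cos (snd z), exp (fst z) * sin (snd z))%R.
Definition qpow (q : R) (z : C) (m : Z) : C := cexp (Cmult z (RtoC (IZR m * ln q)%R)).
Definition half_is (s : C) : C := Cplus (RtoC (1/2)%R) (Cmult Ci s).

(* d_{s,s'}(gM) = q^{(1/2+is)H(g)} q^{(1/2+is')H(gr)}, on representatives g *)
Definition dss (V : Type) (adj : V -> V -> Prop) (q : nat) (o : V) (omp : nat -> V)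
  (tau taui r : V -> V) (s s' : C) (g : V -> V) : C :=
  Cmult (qpow (INR q) (half_is s) (Hproj adj o omp tau taui g))
        (qpow (INR q) (half_is s') (Hproj adj o omp tau taui (fun x => g (r x)))).

(* Main.v *)
Require Import Defs.
From Stdlib Require Import Reals ZArith List.
From Coquelicot Require Import Coquelicot.
From Stdlib Require Import Lia ClassicalEpsilon Classical FunctionalExtensionality.
Import ListNotations.
Set Implicit Arguments.
Local Open Scope nat_scope.

Lemma min_nat (P : nat -> Prop) : (exists n, P n) -> exists n, P n /\ forall m, P m -> n <= m.
Proof.
  intros [n Hn]. revert Hn. induction n as [n IH] using lt_wf_ind. intros Hn.
  destruct (classic (exists m, m < n /\ P m)) as [[m [Hm Pm]]|H].
  - exact (IH m Hm Pm).
  - exists n. split; auto. intros m Pm. destruct (Nat.lt_ge_cases m n); auto. exfalso; eauto.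
Qed.

Section G.
Variable V : Type.
Variable adj : V -> V -> Prop.
Hypothesis Htree : is_tree adj.

Definition fwalk (f : nat -> V) n := forall i, i < n -> adj (f i) (f (S i)).
Definition fred (f : nat -> V) n := forall i, i + 2 <= n -> f i <> f (i+2).
Definition W x y n := exists f, f 0 = x /\ f n = y /\ fwalk f n.

Lemma adj_sym x y : adj x y -> adj y x.
Proof. destruct Htree as [H _]. auto. Qed.
Lemma adj_irr x : ~ adj x x.
Proof. destruct Htree as [_ [H _]]. auto. Qed.

Lemma walk_nth x l y : walk adj x l y -> forall d,
  (forall i, i < length l -> adj (nth i (x::l) d) (nth (S i) (x::l) d)) /\ nth (length l) (x::l) d = y.
Proof.
  induction 1; intros d; simpl.
  - split; [intros; lia| auto].
  - destruct (IHwalk d) as [H1 H2]. split; auto.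
    intros [|i] Hi; simpl; auto. apply H1. lia.
Qed.

Lemma map_seq_shift (f : nat -> V) k n : map f (seq (S k) n) = map (fun i => f (S i)) (seq k n).
Proof. rewrite <- seq_shift, map_map. reflexivity. Qed.

Lemma walk_of_f n : forall f, fwalk f n -> walk adj (f 0) (map f (seq 1 n)) (f n).
Proof.
  induction n; intros f Hf; simpl.
  - constructor.
  - constructor. apply Hf; lia.
    rewrite map_seq_shift. apply (IHn (fun i => f (S i))).
    intros i Hi. apply Hf. lia.
Qed.

Lemma nth_f (f : nat -> V) n i d : i <= n -> nth i (f 0 :: map f (seq 1 n)) d = f i.
Proof.
  intros Hi. change (f 0 :: map f (seq 1 n)) with (map f (seq 0 (S n))).
  rewrite (nth_indep _ d (f 0)) by (rewrite length_map, length_seq; lia).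
  rewrite map_nth, seq_nth by lia. reflexivity.
Qed.

Lemma tree_f f n : fwalk f n -> fred f n -> f 0 = f n -> n = 0.
Proof.
  intros Hw Hr He. destruct Htree as [_ [_ [_ Ht]]].
  assert (Hwk := walk_of_f Hw). rewrite <- He in Hwk.
  assert (Hl : map f (seq 1 n) = []).
  { apply (Ht _ _ Hwk). intros i Hi. simpl in Hi. rewrite length_map, length_seq in Hi.
    rewrite !nth_f by lia. replace (i+2) with (i+2) by lia. apply Hr. lia. }
  apply (f_equal (@length V)) in Hl. rewrite length_map, length_seq in Hl. simpl in Hl. auto.
Qed.

Lemma W_walk x y n : W x y n <-> exists l, walk adj x l y /\ length l = n.
Proof.
  split.
  - intros [f [H0 [Hn Hw]]]. exists (map f (seq 1 n)). split.
    + subst. apply walk_of_f; auto.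
    + rewrite length_map, length_seq; auto.
  - intros [l [Hw Hl]]. exists (fun i => nth i (x::l) x). subst n.
    destruct (walk_nth Hw x) as [H1 H2]. repeat split; auto.
Qed.

Notation dst := (Defs.dist adj).

Lemma dst_spec x y : W x y (dst x y) /\ forall m, W x y m -> dst x y <= m.
Proof.
  assert (Hc : forall x y, exists n, W x y n).
  { intros a b. destruct Htree as [_ [_ [Hc _]]]. destruct (Hc a b) as [l Hl].
    exists (length l). apply W_walk. eauto. }
  destruct (@min_nat _ (Hc x y)) as [n [Hn Hmin]].
  assert (Hd : is_dist adj x y n).
  { split. apply W_walk; auto. intros l Hl. apply Hmin. apply W_walk. eauto. }
  unfold Defs.dist. pose proof (epsilon_spec (inhabits 0) (is_dist adj x y) (ex_intro _ n Hd)) as [H1 H2].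
  split. apply W_walk; auto. intros m Hm. apply W_walk in Hm. destruct Hm as [l [Hl Hlen]]. subst m. auto.
Qed.

Lemma dst_W x y : W x y (dst x y). Proof. apply dst_spec. Qed.
Lemma dst_le x y m : W x y m -> dst x y <= m. Proof. apply dst_spec. Qed.

Lemma fwalk_le f n m : fwalk f n -> m <= n -> fwalk f m.
Proof. intros H Hm i Hi. apply H. lia. Qed.
Lemma fred_le f n m : fred f n -> m <= n -> fred f m.
Proof. intros H Hm i Hi. apply H. lia. Qed.
Lemma fwalk_shift f n k : fwalk f n -> fwalk (fun i => f (k + i)) (n - k).
Proof. intros H i Hi. replace (k + S i) with (S (k + i)) by lia. apply H. lia. Qed.
Lemma fred_shift f n k : fred f n -> fred (fun i => f (k + i)) (n - k).
Proof. intros H i Hi. replace (k + (i + 2)) with ((k + i) + 2) by lia. apply H. lia. Qed.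

Lemma dst_red x y : exists f, f 0 = x /\ f (dst x y) = y /\ fwalk f (dst x y) /\ fred f (dst x y).
Proof.
  destruct (dst_W x y) as [f [H0 [Hn Hw]]]. exists f. repeat split; auto.
  intros i Hi Heq. set (d := dst x y) in *.
  set (g := fun j => if j <=? i then f j else f (j + 2)).
  assert (W x y (d - 2)).
  { exists g. unfold g. repeat split.
    - simpl. auto.
    - destruct (Nat.leb_spec (d-2) i).
      + replace (d - 2) with i by lia. rewrite Heq, <- Hn. f_equal. lia.
      + rewrite <- Hn. f_equal. lia.
    - intros j Hj. destruct (Nat.leb_spec j i); destruct (Nat.leb_spec (S j) i).
      + apply Hw. lia.
      + assert (j = i) by lia. subst j. rewrite Heq. replace (S i + 2) with (S (i+2)) by lia. apply Hw. lia.
      + lia.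
      + replace (S j + 2) with (S (j+2)) by lia. apply Hw. lia. }
  apply dst_le in H. lia.
Qed.

Lemma red_unique n : forall m f g, fwalk f n -> fred f n -> fwalk g m -> fred g m ->
  f 0 = g 0 -> f n = g m -> n = m /\ forall i, i <= n -> f i = g i.
Proof.
  induction n; intros m f g Hf Rf Hg Rg H0 Hn.
  - assert (m = 0). { apply (tree_f Hg Rg). congruence. } subst m. split; auto.
    intros i Hi. replace i with 0 by lia. auto.
  - destruct m.
    { exfalso. assert (S n = 0) by (apply (tree_f Hf Rf); congruence). lia. }
    destruct (classic (f n = g m)) as [E|E].
    + destruct (IHn m f g) as [IH1 IH2]; auto.
      apply (fwalk_le Hf); lia. apply (fred_le Rf); lia. apply (fwalk_le Hg); lia. apply (fred_le Rg); lia.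
      split. lia. intros i Hi. destruct (Nat.eq_dec i (S n)). subst i. congruence. apply IH2. lia.
    + exfalso.
      set (N := S n). set (M := S m).
      set (h := fun i => if i <=? N then f i else g (N + M - i)).
      assert (h1 : forall i, i <= N -> h i = f i).
      { intros i Hi. unfold h. destruct (Nat.leb_spec i N); auto; lia. }
      assert (h2 : forall i, N <= i -> h i = g (N + M - i)).
      { intros i Hi. unfold h. destruct (Nat.leb_spec i N).
        - assert (i = N) by lia. subst i. replace (N + M - N) with M by lia. auto.
        - auto. }
      assert (N + M = 0).
      { apply (tree_f (f := h)).
        - intros i Hi. destruct (Nat.lt_ge_cases i N).
          + rewrite !h1 by lia. apply Hf. lia.
          + rewrite !h2 by lia. apply adj_sym. replace (N + M - i) with (S (N + M - S i)) by lia. apply Hg. lia.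
        - intros i Hi. destruct (Nat.lt_ge_cases (i + 2) (S N)).
          + rewrite !h1 by lia. apply Rf. lia.
          + destruct (Nat.lt_ge_cases i N).
            * assert (i = n) by (unfold N in *; lia). subst i. rewrite h1 by lia. rewrite h2 by lia.
              replace (N + M - (n + 2)) with m by (unfold N, M; lia). auto.
            * rewrite !h2 by lia. intros Heq. apply (Rg (N + M - (i + 2))). lia.
              replace (N + M - (i + 2) + 2) with (N + M - i) by lia. auto.
        - rewrite h1 by lia. rewrite h2 by lia. replace (N + M - (N + M)) with 0 by lia. auto. }
      unfold N in *; lia.
Qed.

Lemma red_dist f n : fwalk f n -> fred f n -> dst (f 0) (f n) = n.
Proof.
  intros Hw Hr. destruct (dst_red (f 0) (f n)) as [g [G0 [Gn [Gw Gr]]]].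
  destruct (red_unique Hw Hr Gw Gr) as [E _]; auto; congruence.
Qed.

Lemma dst_0 x y : dst x y = 0 -> x = y.
Proof. intros H. destruct (dst_W x y) as [f [H0 [Hn _]]]. rewrite H in Hn. congruence. Qed.
Lemma dst_refl x : dst x x = 0.
Proof. assert (W x x 0) by (exists (fun _ => x); repeat split; intros i Hi; lia). apply dst_le in H. lia. Qed.

End G.

Section R.
Variable V : Type.
Variable adj : V -> V -> Prop.
Hypothesis Htree : is_tree adj.
Notation dst := (Defs.dist adj).

Lemma ray_fwalk u n : ray adj u -> fwalk adj u n.
Proof. intros H i _. apply H. Qed.
Lemma ray_fred u n : ray adj u -> fred u n.
Proof. intros H i _. replace (i+2) with (S (S i)) by lia. apply H. Qed.
Lemma ray_shift u k : ray adj u -> ray adj (fun i => u (k + i)).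
Proof. intros H n. replace (k + S n) with (S (k + n)) by lia. replace (k + S (S n)) with (S (S (k + n))) by lia. apply H. Qed.

Lemma ray_dist u a b : ray adj u -> a <= b -> dst (u a) (u b) = b - a.
Proof.
  intros H Hab. pose proof (red_dist Htree (ray_fwalk (n:=b - a) (ray_shift a H)) (ray_fred (n:=b-a) (ray_shift a H))) as E.
  simpl in E. rewrite Nat.add_0_r in E. replace (a + (b - a)) with b in E by lia. auto.
Qed.

Lemma aut_inv g : is_aut adj g -> exists h, is_aut adj h /\ (forall x, h (g x) = x) /\ (forall x, g (h x) = x).
Proof.
  intros [Ha [h [H1 H2]]]. exists h. repeat split; auto.
  - intros Hxy. apply Ha. rewrite !H2. auto.
  - intros Hxy. apply Ha in Hxy. rewrite !H2 in Hxy. auto.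
  - exists g. split; auto.
Qed.

Lemma aut_comp g g' : is_aut adj g -> is_aut adj g' -> is_aut adj (fun x => g (g' x)).
Proof.
  intros [Ha [h [H1 H2]]] [Ha' [h' [H1' H2']]]. split.
  - intros x y. rewrite (Ha' x y), (Ha (g' x) (g' y)). tauto.
  - exists (fun x => h' (h x)). split; intros x. rewrite H1; auto. rewrite H2'; auto.
Qed.

Lemma aut_id : is_aut adj (fun x => x).
Proof. split. tauto. exists (fun x => x). auto. Qed.

Lemma aut_ray g u : is_aut adj g -> ray adj u -> ray adj (fun n => g (u n)).
Proof.
  intros [Ha [h [H1 H2]]] Hu n. destruct (Hu n) as [A B]. split.
  - apply (proj1 (Ha _ _)); auto.
  - intros E. apply B. rewrite <- (H1 (u n)), E. auto.
Qed.

Lemma aut_W g x y n : is_aut adj g -> W adj x y n -> W adj (g x) (g y) n.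
Proof.
  intros [Ha _] [f [H0 [Hn Hw]]]. exists (fun i => g (f i)). repeat split; try congruence.
  intros i Hi. apply (proj1 (Ha _ _)). auto.
Qed.

Lemma aut_dist g x y : is_aut adj g -> dst (g x) (g y) = dst x y.
Proof.
  intros Hg. destruct (aut_inv Hg) as [h [Hh [H1 H2]]].
  apply Nat.le_antisymm.
  - apply dst_le; auto. apply aut_W; auto. apply dst_W; auto.
  - rewrite <- (H1 x), <- (H1 y) at 1. apply dst_le; auto. apply aut_W; auto. apply dst_W; auto.
Qed.

Lemma bequiv_refl (u : nat -> V) : bequiv u u.
Proof. exists 0, 0. auto. Qed.
Lemma bequiv_sym (u w : nat -> V) : bequiv u w -> bequiv w u.
Proof. intros [k [m H]]. exists m, k. auto. Qed.
Lemma bequiv_trans (u w z : nat -> V) : bequiv u w -> bequiv w z -> bequiv u z.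
Proof.
  intros [k [m H]] [k' [m' H']]. exists (k + k'), (m + m'). intros n.
  replace (n + (k + k')) with ((n + k') + k) by lia. rewrite H.
  replace (n + k' + m) with ((n + m) + k') by lia. rewrite H'. f_equal. lia.
Qed.
Lemma bequiv_shift (u : nat -> V) k : bequiv (fun i => u (k + i)) u.
Proof. exists 0, k. intros n. f_equal. lia. Qed.
Lemma bequiv_map (f : V -> V) u w : bequiv u w -> bequiv (fun n => f (u n)) (fun n => f (w n)).
Proof. intros [k [m H]]. exists k, m. intros n. rewrite H. auto. Qed.

Definition Ev x (w : nat -> V) : Z := epsilon (inhabits 0%Z)
  (fun e => exists N0, forall N, N0 <= N -> (Z.of_nat (dst x (w N)) - Z.of_nat N)%Z = e).

Lemma Ev_eq x w e : (exists N0, forall N, N0 <= N -> (Z.of_nat (dst x (w N)) - Z.of_nat N)%Z = e) -> Ev x w = e.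
Proof.
  intros H.
  assert (HE : exists N1, forall N, N1 <= N -> (Z.of_nat (dst x (w N)) - Z.of_nat N)%Z = Ev x w).
  { unfold Ev. apply (epsilon_spec (inhabits 0%Z) (fun e => exists N0, forall N, N0 <= N -> (Z.of_nat (dst x (w N)) - Z.of_nat N)%Z = e)).
    exists e. exact H. }
  destruct HE as [N1 H1]. destruct H as [N0 H0].
  rewrite <- (H1 (max N0 N1)) by lia. apply H0. lia.
Qed.

Lemma ray_exists w x : ray adj w -> exists v, ray adj v /\ v 0 = x /\ exists m N0, forall t, v (m + t) = w (N0 + t).
Proof.
  intros Hw.
  destruct (@min_nat (fun d => exists N, dst x (w N) = d)) as [d0 [[N0 HN0] Hmin]].
  { exists (dst x (w 0)). eauto. }
  destruct (dst_red Htree x (w N0)) as [f [F0 [Fn [Fw Fr]]]]. rewrite HN0 in Fn, Fw, Fr.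
  set (v := fun i => if i <=? d0 then f i else w (N0 + (i - d0))).
  assert (v1 : forall i, i <= d0 -> v i = f i).
  { intros i Hi. unfold v. destruct (Nat.leb_spec i d0); auto; lia. }
  assert (v2 : forall i, d0 <= i -> v i = w (N0 + (i - d0))).
  { intros i Hi. unfold v. destruct (Nat.leb_spec i d0); auto.
    assert (i = d0) by lia. subst i. rewrite Fn. f_equal. lia. }
  exists v. split; [|split].
  - intros n. split.
    + destruct (Nat.lt_ge_cases n d0).
      * rewrite !v1 by lia. apply Fw. lia.
      * rewrite !v2 by lia. replace (N0 + (S n - d0)) with (S (N0 + (n - d0))) by lia. apply Hw.
    + destruct (Nat.lt_ge_cases (S n) d0).
      * rewrite !v1 by lia. replace (S (S n)) with (n + 2) by lia. apply Fr. lia.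
      * destruct (Nat.lt_ge_cases n d0).
        -- assert (S n = d0) by lia. rewrite v1 by lia. rewrite v2 by lia. intros E.
           assert (W adj x (w (N0 + 1)) n).
           { exists f. repeat split; auto. rewrite E. f_equal. lia. apply (fwalk_le Fw). lia. }
           apply dst_le in H2; auto. assert (d0 <= dst x (w (N0 + 1))) by eauto. lia.
        -- rewrite !v2 by lia. replace (N0 + (S (S n) - d0)) with (S (S (N0 + (n - d0)))) by lia. apply Hw.
  - rewrite v1 by lia. auto.
  - exists d0, N0. intros t. rewrite v2 by lia. f_equal. lia.
Qed.

Lemma Ev_spec x w : ray adj w -> exists N0, forall N, N0 <= N -> (Z.of_nat (dst x (w N)) - Z.of_nat N)%Z = Ev x w.
Proof.
  intros Hw. destruct (ray_exists x Hw) as [v [Hv [V0 [m [N0 H]]]]].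
  assert (E : Ev x w = (Z.of_nat m - Z.of_nat N0)%Z).
  { apply Ev_eq. exists N0. intros N HN. replace N with (N0 + (N - N0)) by lia.
    rewrite <- H, <- V0. rewrite ray_dist by (auto; lia). lia. }
  rewrite E. exists N0. intros N HN. replace N with (N0 + (N - N0)) by lia.
  rewrite <- H, <- V0. rewrite ray_dist by (auto; lia). lia.
Qed.

Lemma Ev_bequiv x w w' k m : ray adj w -> (forall n, w (n + k) = w' (n + m)) ->
  Ev x w' = (Ev x w + Z.of_nat k - Z.of_nat m)%Z.
Proof.
  intros Hw H. destruct (Ev_spec x Hw) as [N0 H0]. apply Ev_eq.
  exists (N0 + m). intros N HN. replace N with ((N - m) + m) by lia. rewrite <- H.
  rewrite <- (H0 (N - m + k)) by lia. lia.
Qed.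

Definition DvC x z w := (Ev x w - Ev z w)%Z.

Lemma Dv_bequiv x z w w' : ray adj w -> bequiv w w' -> DvC x z w' = DvC x z w.
Proof. intros Hw [k [m H]]. unfold DvC. rewrite (@Ev_bequiv x w w' k m Hw H), (@Ev_bequiv z w w' k m Hw H). lia. Qed.

Lemma Ev_aut g x w : is_aut adj g -> ray adj w -> Ev (g x) (fun n => g (w n)) = Ev x w.
Proof.
  intros Hg Hw. destruct (Ev_spec x Hw) as [N0 H0]. apply Ev_eq. exists N0. intros N HN.
  rewrite aut_dist by auto. auto.
Qed.

Lemma Dv_aut g x z w : is_aut adj g -> ray adj w -> DvC (g x) (g z) (fun n => g (w n)) = DvC x z w.
Proof. intros. unfold DvC. rewrite !Ev_aut; auto. Qed.

Lemma Ev_ray w a : ray adj w -> Ev (w a) w = (- Z.of_nat a)%Z.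
Proof.
  intros Hw. apply Ev_eq. exists a. intros N HN. rewrite ray_dist by auto. lia.
Qed.

Lemma ray_uniq u u' : ray adj u -> ray adj u' -> u 0 = u' 0 -> bequiv u u' -> forall i, u i = u' i.
Proof.
  intros Hu Hu' H0 [k [m H]].
  destruct (red_unique Htree (ray_fwalk (n:=k) Hu) (ray_fred (n:=k) Hu) (ray_fwalk (n:=m) Hu') (ray_fred (n:=m) Hu') H0 (H 0)) as [E1 E2].
  subst m. intros i. destruct (Nat.le_gt_cases i k). auto.
  replace i with ((i - k) + k) by lia. apply H.
Qed.

Lemma busemann_Ev o x w : ray adj w -> busemann adj o x w = DvC o x w.
Proof.
  intros Hw.
  destruct (ray_exists o Hw) as [u [Hu [U0 [k1 [m1 Hum]]]]].
  destruct (ray_exists x Hw) as [v [Hv [V0 [k2 [m2 Hvm]]]]].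
  assert (Bu : bequiv u w). { exists k1, m1. intros n. rewrite Nat.add_comm, Hum. f_equal. lia. }
  assert (Bv : bequiv v w). { exists k2, m2. intros n. rewrite Nat.add_comm, Hvm. f_equal. lia. }
  assert (RU : forall u', ray adj u' -> bequiv u' w -> u' 0 = u 0 -> forall i, u' i = u i).
  { intros u' H1 H2 H3. apply ray_uniq; auto. eapply bequiv_trans; eauto. apply bequiv_sym; auto. }
  assert (RV : forall u', ray adj u' -> bequiv u' w -> u' 0 = v 0 -> forall i, u' i = v i).
  { intros u' H1 H2 H3. apply ray_uniq; auto. eapply bequiv_trans; eauto. apply bequiv_sym; auto. }
  assert (Key : forall y, (forall z, (rayset adj o w z /\ rayset adj x w z) <-> rayset adj y w z) ->
     (Z.of_nat (dst o y) - Z.of_nat (dst x y))%Z = DvC o x w).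
  { intros y Hy.
    destruct (ray_exists y Hw) as [r [Hr [R0 [k3 [m3 Hrm]]]]].
    assert (Br : bequiv r w). { exists k3, m3. intros n. rewrite Nat.add_comm, Hrm. f_equal. lia. }
    destruct (proj2 (Hy y) (ex_intro _ r (conj Hr (conj R0 (conj Br (ex_intro _ 0 R0)))))) as [[u' [Hu' [U0' [Bu' [a Ha]]]]] [v' [Hv' [V0' [Bv' [b Hb]]]]]].
    rewrite (RU u') in Ha by (auto; congruence).
    rewrite (RV v') in Hb by (auto; congruence).
    assert (Huv : forall i, u (a + i) = v (b + i)).
    { apply ray_uniq. apply ray_shift; auto. apply ray_shift; auto. simpl. rewrite !Nat.add_0_r. congruence.
      eapply bequiv_trans. apply bequiv_shift. eapply bequiv_trans. eauto. apply bequiv_sym.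
      eapply bequiv_trans. apply bequiv_shift. auto. }
    rewrite (Dv_bequiv o x Hu Bu).
    unfold DvC. rewrite <- U0. rewrite Ev_ray by auto.
    assert (Ev x u = (Z.of_nat b - Z.of_nat a)%Z).
    { apply Ev_eq. exists a. intros N HN. replace N with (a + (N - a)) by lia. rewrite Huv, <- V0.
      rewrite ray_dist by (auto; lia). lia. }
    rewrite H. assert (dst x y = b) by (rewrite <- Hb, <- V0, ray_dist by (auto; lia); lia). assert (dst (u 0) y = a) by (rewrite <- Ha, ray_dist by (auto;lia); lia). lia. }
  unfold busemann.
  assert (Ex : exists b, exists y, (forall z, (rayset adj o w z /\ rayset adj x w z) <-> rayset adj y w z) /\
            b = (Z.of_nat (dst o y) - Z.of_nat (dst x y))%Z).
  { assert (Buv : bequiv u v). { eapply bequiv_trans; eauto. apply bequiv_sym; auto. }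
    destruct (@min_nat (fun a => exists b, u a = v b)) as [a0 [[b0 Hab] Hmin]].
    { destruct Buv as [k [m H]]. exists k, m. specialize (H 0). simpl in H. auto. }
    assert (Huv : forall i, u (a0 + i) = v (b0 + i)).
    { apply ray_uniq. apply ray_shift; auto. apply ray_shift; auto. simpl. rewrite !Nat.add_0_r. congruence.
      apply bequiv_trans with u. apply bequiv_shift. apply bequiv_trans with v. exact Buv. apply bequiv_sym, bequiv_shift. }
    eexists. exists (u a0). split; [|reflexivity].
    intros z. split.
    - intros [[u' [Hu' [U0' [Bu' [a Ha]]]]] [v' [Hv' [V0' [Bv' [b Hb]]]]]].
      rewrite (RU u') in Ha by (auto; congruence).
      rewrite (RV v') in Hb by (auto; congruence).
      assert (a0 <= a) by (apply Hmin; exists b; congruence).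
      exists (fun i => u (a0 + i)). split. apply ray_shift; auto. split. f_equal; lia.
      split. eapply bequiv_trans. apply bequiv_shift. auto.
      exists (a - a0). rewrite <- Ha. f_equal. lia.
    - intros [r [Hr [R0 [Br [n Hn]]]]].
      assert (E1 : forall i, r i = u (a0 + i)).
      { apply ray_uniq; auto. apply ray_shift; auto. rewrite Nat.add_0_r; auto.
        eapply bequiv_trans. eauto. apply bequiv_sym. eapply bequiv_trans. apply bequiv_shift. auto. }
      split.
      + exists u. refine (conj Hu (conj U0 (conj Bu _))). exists (a0 + n). rewrite <- E1. auto.
      + exists v. refine (conj Hv (conj V0 (conj Bv _))). exists (b0 + n). rewrite <- Huv, <- E1. auto. }
  pose proof (epsilon_spec (inhabits 0%Z) _ Ex) as [y [Hy E]]. rewrite E. apply Key. auto.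
Qed.

End R.

Section BIJ.
Variable V : Type.
Definition eqd (a b : V) : {a = b} + {a <> b} := excluded_middle_informative _.

Definition bij (l1 l2 : list V) (s : V -> V) :=
  (forall x, In x l1 -> In (s x) l2) /\ (forall x x', In x l1 -> In x' l1 -> s x = s x' -> x = x') /\
  (forall y, In y l2 -> exists x, In x l1 /\ s x = y).

Lemma zip_bij l1 : forall l2, NoDup l1 -> NoDup l2 -> length l1 = length l2 -> exists s, bij l1 l2 s.
Proof.
  induction l1 as [|a l1 IH]; intros [|b l2] N1 N2 L; simpl in L; try discriminate.
  - exists (fun x => x). split; [|split]; simpl; tauto.
  - inversion N1; inversion N2; subst. destruct (IH l2) as [s [S1 [S2 S3]]]; auto.
    exists (fun x => if eqd x a then b else s x). split; [|split].
    + intros x [E|Hx]. subst. destruct (eqd x x); [left; auto| congruence].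
      destruct (eqd x a). subst; contradiction. right; auto.
    + intros x x' Hx Hx' E. destruct (eqd x a), (eqd x' a); try congruence.
      * exfalso. destruct Hx' as [Hx'|Hx']. congruence. apply H5. rewrite E. auto.
      * exfalso. destruct Hx as [Hx|Hx]. congruence. apply H5. rewrite <- E. auto.
      * destruct Hx as [Hx|Hx]. congruence. destruct Hx' as [Hx'|Hx']. congruence. auto.
    + intros y [E|Hy]. exists a. split. left; auto. destruct (eqd a a); congruence.
      destruct (S3 y Hy) as [x [Hx E]]. exists x. split. right; auto.
      destruct (eqd x a). subst; contradiction. auto.
Qed.

Definition swap (a b x : V) := if eqd x a then b else if eqd x b then a else x.

Lemma swap_bij l a b : In a l -> In b l -> bij l l (swap a b).
Proof.
  intros Ha Hb. unfold swap. split; [|split].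
  - intros x Hx. destruct (eqd x a); auto. destruct (eqd x b); auto.
  - intros x x' _ _. destruct (eqd x a), (eqd x' a), (eqd x b), (eqd x' b); congruence.
  - intros y Hy. destruct (eqd y a).
    + exists b. split; auto. destruct (eqd b a); [congruence|]. destruct (eqd b b); congruence.
    + destruct (eqd y b).
      * exists a. split; auto. destruct (eqd a a); congruence.
      * exists y. split; auto. destruct (eqd y a); [congruence|]. destruct (eqd y b); congruence.
Qed.

Lemma comp_bij l1 l2 l3 s t : bij l1 l2 s -> bij l2 l3 t -> bij l1 l3 (fun x => t (s x)).
Proof.
  intros [S1 [S2 S3]] [T1 [T2 T3]]. split; [|split].
  - auto.
  - intros x x' Hx Hx' E. apply S2; auto.
  - intros y Hy. destruct (T3 y Hy) as [z [Hz E]]. destruct (S3 z Hz) as [x [Hx E']].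
    exists x. split; auto. congruence.
Qed.

Lemma bij2 l1 l2 x1 x2 y1 y2 : NoDup l1 -> NoDup l2 -> length l1 = length l2 ->
  In x1 l1 -> In x2 l1 -> In y1 l2 -> In y2 l2 -> (x1 = x2 <-> y1 = y2) ->
  exists s, bij l1 l2 s /\ s x1 = y1 /\ s x2 = y2.
Proof.
  intros N1 N2 L H1 H2 H3 H4 Hiff.
  destruct (zip_bij N1 N2 L) as [s0 B0].
  set (s1 := fun x => swap (s0 x1) y1 (s0 x)).
  assert (B1 : bij l1 l2 s1). { refine (@comp_bij l1 l2 l2 s0 (swap (s0 x1) y1) B0 _). apply swap_bij; auto. apply B0; auto. }
  assert (E1 : s1 x1 = y1). { unfold s1, swap. destruct (eqd (s0 x1) (s0 x1)); congruence. }
  set (s2 := fun x => swap (s1 x2) y2 (s1 x)).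
  assert (B2 : bij l1 l2 s2). { refine (@comp_bij l1 l2 l2 s1 (swap (s1 x2) y2) B1 _). apply swap_bij; auto. apply B1; auto. }
  exists s2. split; auto. split.
  - unfold s2. rewrite E1. unfold swap at 1. destruct (eqd y1 (s1 x2)).
    + assert (x1 = x2). { apply B1; auto. congruence. } apply Hiff in H. congruence.
    + destruct (eqd y1 y2); auto.
      apply Hiff in e. subst x2. congruence.
  - unfold s2, swap. destruct (eqd (s1 x2) (s1 x2)); congruence.
Qed.
End BIJ.

Section K.
Variable V : Type.
Variable adj : V -> V -> Prop.
Hypothesis Htree : is_tree adj.
Variable q : nat.
Hypothesis Hreg : regular adj (S q).
Variable o : V.
Notation dst := (Defs.dist adj).
Notation dep v := (dst o v).

Lemma dep0 v : dep v = 0 <-> v = o.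
Proof. split. intros H. symmetry. apply (dst_0 Htree); auto. intros ->. apply (dst_refl Htree). Qed.

Lemma red_prefix f n m : fwalk adj f n -> fred f n -> m <= n -> dst (f 0) (f m) = m.
Proof. intros Hw Hr Hm. apply (red_dist Htree). apply (fwalk_le Hw); auto. apply (fred_le Hr); auto. Qed.

Lemma adj_dep a b : adj a b -> (dep b = dep a + 1) \/ (dep a = dep b + 1 /\ a <> o).
Proof.
  intros Hab. destruct (dst_red Htree o a) as [f [F0 [Fn [Fw Fr]]]]. set (d := dep a) in *.
  destruct (classic (d <> 0 /\ f (d - 1) = b)) as [[Hd E]|NE].
  - right. split.
    + rewrite <- E, <- F0. rewrite red_prefix with (n := d) by (auto; lia). lia.
    + intros ->. apply Hd. apply dep0. auto.
  - left. set (g := fun i => if i <=? d then f i else b).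
    assert (g1 : forall i, i <= d -> g i = f i). { intros i Hi. unfold g. destruct (Nat.leb_spec i d); auto; lia. }
    assert (g2 : g (S d) = b). { unfold g. destruct (Nat.leb_spec (S d) d); auto; lia. }
    assert (Gw : fwalk adj g (S d)).
    { intros i Hi. destruct (Nat.eq_dec i d). subst i. rewrite g2, g1, Fn; auto. rewrite !g1 by lia. apply Fw. lia. }
    assert (Gr : fred g (S d)).
    { intros i Hi. destruct (Nat.eq_dec (i+2) (S d)).
      - rewrite e, g2, g1 by lia. intros E. apply NE. split. lia. rewrite <- E. f_equal. lia.
      - rewrite !g1 by lia. apply Fr. lia. }
    rewrite <- g2. rewrite <- F0, <- (g1 0) by lia. rewrite (red_dist Htree Gw Gr). lia.
Qed.

Definition par v := epsilon (inhabits o) (fun p => adj p v /\ dep p + 1 = dep v).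

Lemma par_ex v : v <> o -> exists p, adj p v /\ dep p + 1 = dep v.
Proof.
  intros Hv. destruct (dst_red Htree o v) as [f [F0 [Fn [Fw Fr]]]]. set (d := dep v) in *.
  assert (d <> 0). { intros H. apply Hv. apply dep0. auto. }
  exists (f (d - 1)). split.
  - rewrite <- Fn. replace (f d) with (f (S (d - 1))) by (f_equal; lia). apply Fw. lia.
  - rewrite <- F0. rewrite red_prefix with (n := d) by (auto; lia). lia.
Qed.

Lemma par_spec v : v <> o -> adj (par v) v /\ dep (par v) + 1 = dep v.
Proof. intros Hv. unfold par. apply (epsilon_spec (inhabits o) (fun p => adj p v /\ dep p + 1 = dep v)). apply par_ex; auto. Qed.

Lemma par_uniq v p : adj p v -> dep p + 1 = dep v -> p = par v.
Proof.
  intros Hp Hd. assert (Hv : v <> o). { intros ->. rewrite (dst_refl Htree) in Hd. lia. }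
  destruct (par_spec Hv) as [Hp' Hd'].
  destruct (adj_dep (adj_sym Htree _ _ Hp)) as [H|[H _]]; try lia.
  assert (Ext : forall p, adj p v -> dep p + 1 = dep v -> exists f, f 0 = o /\ f (dep v) = v /\ fwalk adj f (dep v) /\ fred f (dep v) /\ f (dep p) = p).
  { clear p Hp Hd Hp' Hd' H. intros p Hp Hd.
    destruct (dst_red Htree o p) as [f [F0 [Fn [Fw Fr]]]]. set (d := dep p) in *.
    set (g := fun i => if i <=? d then f i else v).
    assert (g1 : forall i, i <= d -> g i = f i). { intros i Hi. unfold g. destruct (Nat.leb_spec i d); auto; lia. }
    assert (g2 : g (S d) = v). { unfold g. destruct (Nat.leb_spec (S d) d); auto; lia. }
    exists g. rewrite <- Hd. replace (d + 1) with (S d) by lia. split; [|split; [|split; [|split]]].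
    - rewrite g1 by lia. auto.
    - auto.
    - intros i Hi. destruct (Nat.eq_dec i d). subst i. rewrite g2, g1, Fn; auto. rewrite !g1 by lia. apply Fw. lia.
    - intros i Hi. destruct (Nat.eq_dec (i+2) (S d)).
      + rewrite e, g2, g1 by lia. intros E. assert (dst (f 0) (f i) = i) by (apply red_prefix with (n := d); auto; lia).
        rewrite E, F0 in H. lia.
      + rewrite !g1 by lia. apply Fr. lia.
    - rewrite g1; auto. }
  destruct (Ext p Hp Hd) as [f [F0 [Fn [Fw [Fr Fp]]]]].
  destruct (Ext (par v) Hp' Hd') as [g [G0 [Gn [Gw [Gr Gp]]]]].
  destruct (red_unique Htree Fw Fr Gw Gr) as [_ E]; try congruence.
  assert (dep p = dep (par v)) by lia. rewrite <- Fp, <- Gp, <- H0. apply E. lia.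
Qed.

Lemma par_child a b : adj a b -> dep b = dep a + 1 -> par b = a.
Proof. intros H1 H2. symmetry. apply par_uniq; auto; lia. Qed.

Lemma par_ne_child v : v <> o -> forall c, adj v c -> c <> par v -> dep c = dep v + 1.
Proof.
  intros Hv c Hc Hne. destruct (adj_dep Hc) as [H|[H _]]; auto.
  exfalso. apply Hne. apply par_uniq. apply adj_sym; auto. lia.
Qed.

Variables u w : nat -> V.
Hypothesis Hu : ray adj u.
Hypothesis Hw : ray adj w.
Hypothesis U0 : u 0 = o.
Hypothesis W0 : w 0 = o.

Lemma u_dep i : dep (u i) = i.
Proof. rewrite <- U0. rewrite (ray_dist Htree) by (auto; lia). lia. Qed.
Lemma w_dep i : dep (w i) = i.
Proof. rewrite <- W0. rewrite (ray_dist Htree) by (auto; lia). lia. Qed.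
Lemma u_par i : par (u (S i)) = u i.
Proof. apply par_child. apply Hu. rewrite !u_dep. lia. Qed.
Lemma w_par i : par (w (S i)) = w i.
Proof. apply par_child. apply Hw. rewrite !w_dep. lia. Qed.

Definition NL x := epsilon (inhabits []) (fun l => length l = S q /\ NoDup l /\ forall y, adj x y <-> In y l).
Lemma NL_spec x : length (NL x) = S q /\ NoDup (NL x) /\ forall y, adj x y <-> In y (NL x).
Proof. unfold NL. apply (epsilon_spec (inhabits []) (fun l => length l = S q /\ NoDup l /\ forall y, adj x y <-> In y l)). apply Hreg. Qed.

Definition sspec (a b : V) (s : V -> V) : Prop :=
 (forall y, adj a y -> adj b (s y)) /\ (forall y y', adj a y -> adj a y' -> s y = s y' -> y = y') /\
 (forall y', adj b y' -> exists y, adj a y /\ s y = y') /\ (a <> o -> s (par a) = par b) /\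
 (forall i, a = u i -> b = w i -> s (u (S i)) = w (S i)).

Lemma sspec_ex a b : dep a = dep b -> exists s, sspec a b s.
Proof.
  intros Hd. destruct (NL_spec a) as [La [Na Ia]]. destruct (NL_spec b) as [Lb [Nb Ib]].
  assert (L : length (NL a) = length (NL b)) by congruence.
  assert (Fin : forall x1 x2 y1 y2, adj a x1 -> adj a x2 -> adj b y1 -> adj b y2 -> (x1 = x2 <-> y1 = y2) ->
     exists s, ((forall y, adj a y -> adj b (s y)) /\ (forall y y', adj a y -> adj a y' -> s y = s y' -> y = y') /\
               (forall y', adj b y' -> exists y, adj a y /\ s y = y')) /\ s x1 = y1 /\ s x2 = y2).
  { intros x1 x2 y1 y2 A1 A2 B1 B2 Hiff.
    destruct (bij2 Na Nb L (proj1 (Ia _) A1) (proj1 (Ia _) A2) (proj1 (Ib _) B1) (proj1 (Ib _) B2) Hiff) as [s [[S1 [S2 S3]] [E1 E2]]].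
    exists s. split; auto. split; [|split].
    + intros y Hy. apply Ib. apply S1. apply Ia. auto.
    + intros y y' Hy Hy'. apply S2; apply Ia; auto.
    + intros y' Hy'. destruct (S3 y' (proj1 (Ib _) Hy')) as [y [Hy E]]. exists y. split; auto. apply Ia; auto. }
  destruct (classic (a = o)) as [Ao|Ao].
  - assert (Bo : b = o). { apply dep0. rewrite <- Hd. apply dep0. auto. }
    assert (A1 : adj a (u 1)). { rewrite Ao, <- U0. apply Hu. }
    assert (B1 : adj b (w 1)). { rewrite Bo, <- W0. apply Hw. }
    destruct (Fin (u 1) (u 1) (w 1) (w 1)) as [s [P [E _]]]; auto. tauto.
    exists s. split; [|split; [|split; [|split]]]; try apply P.
    + intros H; contradiction.
    + intros i Ei _. assert (i = 0). { rewrite <- (u_dep i), <- Ei. apply dep0; auto. } subst i. auto.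
  - assert (Bo : b <> o). { intros H. apply Ao. apply dep0. rewrite Hd. apply dep0. auto. }
    destruct (par_spec Ao) as [PA _]. destruct (par_spec Bo) as [PB _].
    destruct (classic (exists i, a = u i /\ b = w i)) as [[i [Ai Bi]]|NE].
    + assert (i <> 0). { intros ->. apply Ao. rewrite Ai; auto. }
      assert (Pa : par a = u (i - 1)). { rewrite Ai. replace i with (S (i - 1)) at 1 by lia. apply u_par. }
      assert (Pb : par b = w (i - 1)). { rewrite Bi. replace i with (S (i - 1)) at 1 by lia. apply w_par. }
      destruct (Fin (par a) (u (S i)) (par b) (w (S i))) as [s [P [E1 E2]]].
      * apply (adj_sym Htree _ _ PA).
      * rewrite Ai. apply Hu.
      * apply (adj_sym Htree _ _ PB).
      * rewrite Bi. apply Hw.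
      * rewrite Pa, Pb. split; intros E; exfalso.
        -- apply (f_equal (fun v => dep v)) in E. rewrite !u_dep in E. lia.
        -- apply (f_equal (fun v => dep v)) in E. rewrite !w_dep in E. lia.
      * exists s. split; [|split; [|split; [|split]]]; try apply P.
        -- auto.
        -- intros j Aj Bj. assert (j = i). { rewrite <- (u_dep j), <- (u_dep i), <- Aj, <- Ai. auto. } subst j. auto.
    + destruct (Fin (par a) (par a) (par b) (par b)) as [s [P [E1 _]]].
      * apply (adj_sym Htree _ _ PA).
      * apply (adj_sym Htree _ _ PA).
      * apply (adj_sym Htree _ _ PB).
      * apply (adj_sym Htree _ _ PB).
      * tauto.
      * exists s. split; [|split; [|split; [|split]]]; try apply P.
        -- auto.
        -- intros j Aj Bj. exfalso. apply NE. eauto.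
Qed.

Definition sgm (a b : V) : V -> V := epsilon (inhabits (fun x : V => x)) (sspec a b).
Lemma sgm_spec a b : dep a = dep b -> sspec a b (sgm a b).
Proof. intros H. unfold sgm. apply epsilon_spec. apply sspec_ex; auto. Qed.

Fixpoint kf (n : nat) (v : V) : V := match n with 0 => o | S n => sgm (par v) (kf n (par v)) v end.
Definition kk v := kf (dep v) v.

Lemma kk_o : kk o = o.
Proof. unfold kk. rewrite (dst_refl Htree). reflexivity. Qed.
Lemma kk_par v : v <> o -> kk v = sgm (par v) (kk (par v)) v.
Proof.
  intros Hv. destruct (par_spec Hv) as [_ H]. unfold kk. rewrite <- H. rewrite Nat.add_1_r. reflexivity.
Qed.

Lemma kk_main n : forall v, dep v = n -> dep (kk v) = n /\ (v <> o -> par (kk v) = kk (par v)).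
Proof.
  induction n; intros v Hv.
  - apply dep0 in Hv. subst v. rewrite kk_o. split. apply dep0; auto. tauto.
  - assert (Vo : v <> o). { intros E. apply dep0 in E. lia. }
    destruct (par_spec Vo) as [Pv Dp]. set (p := par v) in *.
    destruct (IHn p ltac:(lia)) as [Dk Hk].
    destruct (sgm_spec p (kk p) ltac:(lia)) as [S1 [S2 [S3 [S4 S5]]]].
    rewrite (kk_par Vo). fold p.
    assert (A : adj (kk p) (sgm p (kk p) v)) by (apply S1; auto).
    destruct (adj_dep A) as [D|[D Ko]].
    + split. lia. intros _. apply par_child; auto.
    + exfalso. assert (Po : p <> o). { intros E. apply Ko. rewrite E, kk_o. auto. }
      assert (E : par (kk p) = sgm p (kk p) v). { apply par_child. apply (adj_sym Htree _ _ A). lia. }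
      rewrite <- S4 in E by auto. apply S2 in E; auto.
      * destruct (par_spec Po) as [_ D2]. rewrite E in D2. lia.
      * destruct (par_spec Po) as [D1 _]. apply (adj_sym Htree _ _ D1).
Qed.

Lemma kk_dep v : dep (kk v) = dep v.
Proof. apply (kk_main (n := dep v)). auto. Qed.
Lemma kk_par2 v : v <> o -> par (kk v) = kk (par v).
Proof. apply (kk_main (n := dep v)). auto. Qed.

Lemma kk_ne v : v <> o -> kk v <> o.
Proof. intros H E. apply H. apply dep0. rewrite <- kk_dep. apply dep0. auto. Qed.

Lemma kk_inj_n n : forall x y, dep x = n -> kk x = kk y -> x = y.
Proof.
  induction n; intros x y Hx E.
  - apply dep0 in Hx. subst x. rewrite kk_o in E. assert (y = o). { apply dep0. rewrite <- kk_dep, <- E. apply dep0. auto. } auto.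
  - assert (Xo : x <> o). { intros F. apply dep0 in F. lia. }
    assert (Yo : y <> o). { intros F. subst y. rewrite kk_o in E. apply (kk_ne Xo E). }
    assert (Pe : par x = par y).
    { apply IHn. destruct (par_spec Xo). lia. rewrite <- !kk_par2 by auto. congruence. }
    rewrite (kk_par Xo), (kk_par Yo), <- Pe in E.
    destruct (par_spec Xo) as [Ax Dx]. destruct (par_spec Yo) as [Ay Dy].
    destruct (sgm_spec (par x) (kk (par x)) (eq_sym (kk_dep _))) as [S1 [S2 _]].
    apply S2 in E; auto. rewrite Pe. auto.
Qed.

Lemma kk_inj x y : kk x = kk y -> x = y.
Proof. apply (kk_inj_n (n := dep x)). auto. Qed.

Lemma kk_adj x y : adj x y <-> adj (kk x) (kk y).
Proof.
  assert (F : forall x y, adj x y -> dep y = dep x + 1 -> adj (kk x) (kk y)).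
  { intros a b H D. assert (Bo : b <> o). { intros E. apply dep0 in E. lia. }
    rewrite (kk_par Bo). rewrite (par_child H D).
    destruct (sgm_spec a (kk a) (eq_sym (kk_dep _))) as [S1 _]. apply S1. auto. }
  assert (Bk : forall x y, adj (kk x) (kk y) -> dep (kk y) = dep (kk x) + 1 -> adj x y).
  { intros a b H D. rewrite !kk_dep in D. assert (Bo : b <> o). { intros E. apply dep0 in E. lia. }
    assert (E : par (kk b) = kk a). { apply par_child; auto. rewrite !kk_dep. auto. }
    rewrite kk_par2 in E by auto. apply kk_inj in E. rewrite <- E. apply par_spec; auto. }
  split; intros H.
  - destruct (adj_dep H) as [D|[D _]]. auto. apply (adj_sym Htree). apply F. apply (adj_sym Htree); auto. auto.
  - destruct (adj_dep H) as [D|[D _]]. auto. apply (adj_sym Htree). apply Bk. apply (adj_sym Htree); auto. auto.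
Qed.

Lemma kk_surj_n n : forall z, dep z = n -> exists v, kk v = z.
Proof.
  induction n; intros z Hz.
  - exists o. rewrite kk_o. symmetry. apply dep0; auto.
  - assert (Zo : z <> o). { intros F. apply dep0 in F. lia. }
    destruct (par_spec Zo) as [Az Dz].
    destruct (IHn (par z) ltac:(lia)) as [p Hp].
    assert (Dp : dep p = n). { rewrite <- kk_dep, Hp. lia. }
    destruct (sgm_spec p (kk p) (eq_sym (kk_dep _))) as [S1 [S2 [S3 [S4 S5]]]].
    destruct (S3 z) as [v [Av Ev]]. rewrite Hp. auto.
    destruct (adj_dep Av) as [D|[D Po]].
    + exists v. assert (Vo : v <> o). { intros F. apply dep0 in F. lia. }
      rewrite (kk_par Vo), (par_child Av D). auto.
    + exfalso. assert (par p = v). { apply par_child. apply (adj_sym Htree); auto. lia. }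
      rewrite <- H, S4 in Ev by auto. rewrite Hp in Ev.
      assert (n <> 0) by (intros E0; apply Po; apply dep0; lia). assert (Pz : par z <> o) by (intros F; rewrite F, (dst_refl Htree) in Dz; lia).
      destruct (par_spec Pz) as [_ D3]. rewrite Ev in D3. lia.
Qed.

Lemma kk_aut : is_aut adj kk.
Proof.
  split. apply kk_adj.
  exists (fun z => epsilon (inhabits o) (fun v => kk v = z)). split.
  - intros x. apply kk_inj. apply (epsilon_spec (inhabits o) (fun v => kk v = kk x)). eauto.
  - intros z. apply (epsilon_spec (inhabits o) (fun v => kk v = z)). apply (kk_surj_n (n := dep z)). auto.
Qed.

Lemma kk_ray i : kk (u i) = w i.
Proof.
  induction i. rewrite U0, W0. apply kk_o.
  assert (Uo : u (S i) <> o). { intros F. apply dep0 in F. rewrite u_dep in F. lia. }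
  rewrite (kk_par Uo), u_par, IHi.
  destruct (sgm_spec (u i) (w i) ltac:(rewrite u_dep, w_dep; auto)) as [_ [_ [_ [_ S5]]]]. auto.
Qed.

End K.

Lemma K_exists V (adj : V -> V -> Prop) q o u w : is_tree adj -> regular adj (S q) ->
  ray adj u -> ray adj w -> u 0 = o -> w 0 = o ->
  exists k, is_aut adj k /\ k o = o /\ forall i, k (u i) = w i.
Proof.
  intros. exists (kk adj o u w). split. eapply kk_aut; eauto. split. eapply kk_o; eauto. intros. eapply kk_ray; eauto.
Qed.
Unset Implicit Arguments.
Local Close Scope nat_scope.

Lemma cexp_add x y : Cmult (cexp x) (cexp y) = cexp (Cplus x y).
Proof.
  destruct x as [a b], y as [c d]. unfold cexp, Cmult, Cplus. simpl.
  rewrite exp_plus, cos_plus, sin_plus. apply injective_projections; simpl; ring.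
Qed.

Lemma qpow_add q z a b : qpow q z (a + b) = Cmult (qpow q z a) (qpow q z b).
Proof.
  unfold qpow. rewrite cexp_add. f_equal. rewrite plus_IZR.
  destruct z as [z1 z2]. unfold Cmult, Cplus, RtoC. simpl. apply injective_projections; simpl; ring.
Qed.

Section Main.
Local Open Scope nat_scope.
Variable V : Type.
Variable adj : V -> V -> Prop.
Variable q : nat.
Variable o : V.
Variables om_m om_p : nat -> V.
Variable gam : Z -> V.
Variables tau taui r : V -> V.
Hypothesis Htree : is_tree adj.
Hypothesis Hreg : regular adj (S q).
Hypothesis Hm : ray adj om_m.
Hypothesis Hp : ray adj om_p.
Hypothesis Hgeo : geodesic adj gam.
Hypothesis G0 : gam 0%Z = o.
Hypothesis BP : bequiv (fun n => gam (Z.of_nat n)) om_p.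
Hypothesis BM : bequiv (fun n => gam (- Z.of_nat n)%Z) om_m.
Hypothesis Taut : is_aut adj tau.
Hypothesis Ti1 : forall x, taui (tau x) = x.
Hypothesis Ti2 : forall x, tau (taui x) = x.
Hypothesis TP : bequiv (fun n => tau (om_p n)) om_p.
Hypothesis TM : bequiv (fun n => tau (om_m n)) om_m.
Hypothesis Tg : forall n, tau (gam n) = gam (n + 1)%Z.
Hypothesis Raut : is_aut adj r.
Hypothesis Ro : r o = o.
Hypothesis Rr : forall x, r (r x) = x.
Hypothesis Rt : forall j x, r (tpow tau taui j (r x)) = tpow tau taui (- j) x.

Notation dst := (Defs.dist adj).
Notation Dv := (DvC adj).
Notation Ev := (Ev adj).

Lemma rayP c : ray adj (fun n => gam (c + Z.of_nat n)%Z).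
Proof.
  intros n. destruct (Hgeo (c + Z.of_nat n)%Z) as [A B]. split.
  - replace (c + Z.of_nat (S n))%Z with (c + Z.of_nat n + 1)%Z by lia. auto.
  - replace (c + Z.of_nat (S (S n)))%Z with (c + Z.of_nat n + 2)%Z by lia. auto.
Qed.
Lemma rayM c : ray adj (fun n => gam (c - Z.of_nat n)%Z).
Proof.
  intros n. destruct (Hgeo (c - Z.of_nat (S n))%Z) as [A _]. destruct (Hgeo (c - Z.of_nat (S (S n)))%Z) as [_ B]. split.
  - replace (c - Z.of_nat (S n) + 1)%Z with (c - Z.of_nat n)%Z in A by lia. apply (adj_sym Htree); auto.
  - replace (c - Z.of_nat (S (S n)) + 2)%Z with (c - Z.of_nat n)%Z in B by lia. auto.
Qed.

Lemma dst_gam a b : (a <= b)%Z -> dst (gam a) (gam b) = Z.to_nat (b - a) /\ dst (gam b) (gam a) = Z.to_nat (b - a).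
Proof.
  intros H. split.
  - pose proof (ray_dist Htree (a:=0) (b:=Z.to_nat (b - a)) (rayP a) ltac:(lia)) as E. simpl in E.
    replace (a + 0)%Z with a in E by lia. replace (a + Z.of_nat (Z.to_nat (b - a)))%Z with b in E by lia. lia.
  - pose proof (ray_dist Htree (a:=0) (b:=Z.to_nat (b - a)) (rayM b) ltac:(lia)) as E. simpl in E.
    replace (b - 0)%Z with b in E by lia. replace (b - Z.of_nat (Z.to_nat (b - a)))%Z with a in E by lia. lia.
Qed.

Lemma rayP0 : ray adj (fun n => gam (Z.of_nat n)).
Proof. pose proof (rayP 0). simpl in H. auto. Qed.
Lemma rayM0 : ray adj (fun n => gam (- Z.of_nat n)%Z).
Proof. pose proof (rayM 0). simpl in H. auto. Qed.

Lemma Ev_gamP j : Ev (gam j) (fun n => gam (Z.of_nat n)) = (- j)%Z.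
Proof.
  apply Ev_eq. exists (Z.to_nat (Z.abs j)). intros N HN.
  destruct (dst_gam j (Z.of_nat N) ltac:(lia)) as [E _]. rewrite E. lia.
Qed.
Lemma Ev_gamM j : Ev (gam j) (fun n => gam (- Z.of_nat n)%Z) = j.
Proof.
  apply Ev_eq. exists (Z.to_nat (Z.abs j)). intros N HN.
  destruct (dst_gam (- Z.of_nat N) j ltac:(lia)) as [_ E]. rewrite E. lia.
Qed.

Lemma Dv_P a b : Dv (gam a) (gam b) om_p = (b - a)%Z.
Proof. rewrite (Dv_bequiv Htree (gam a) (gam b) rayP0 BP). unfold DvC. rewrite !Ev_gamP. lia. Qed.
Lemma Dv_M a b : Dv (gam a) (gam b) om_m = (a - b)%Z.
Proof. rewrite (Dv_bequiv Htree (gam a) (gam b) rayM0 BM). unfold DvC. rewrite !Ev_gamM. lia. Qed.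

Lemma iter_inv (f g : V -> V) : (forall x, g (f x) = x) -> forall n x, Nat.iter n g (Nat.iter n f x) = x.
Proof.
  intros H n. induction n; intros x; simpl; auto.
  assert (forall m y, Nat.iter m g (g y) = g (Nat.iter m g y)).
  { induction m; intros y; simpl; auto. rewrite IHm. auto. }
  rewrite <- H0, H. auto.
Qed.

Lemma tpow_inv j x : tpow tau taui (- j) (tpow tau taui j x) = x.
Proof. destruct j; simpl; auto; apply iter_inv; auto. Qed.

Lemma taui_gam n : taui (gam n) = gam (n - 1)%Z.
Proof. rewrite <- (Ti1 (gam (n - 1))). rewrite Tg. f_equal. f_equal. lia. Qed.

Lemma iter_tau n a : Nat.iter n tau (gam a) = gam (a + Z.of_nat n)%Z.
Proof. induction n; simpl. f_equal; lia. rewrite IHn, Tg. f_equal. lia. Qed.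
Lemma iter_taui n a : Nat.iter n taui (gam a) = gam (a - Z.of_nat n)%Z.
Proof. induction n; simpl. f_equal; lia. rewrite IHn, taui_gam. f_equal. lia. Qed.

Lemma tpow_gam j a : tpow tau taui j (gam a) = gam (a + j)%Z.
Proof.
  destruct j; simpl.
  - f_equal. lia.
  - rewrite iter_tau. f_equal. lia.
  - rewrite iter_taui. f_equal. lia.
Qed.

Lemma tpow_o j : tpow tau taui j o = gam j.
Proof. rewrite <- G0, tpow_gam. f_equal. Qed.

Lemma taui_aut : is_aut adj taui.
Proof.
  destruct Taut as [Ta _]. split.
  - intros x y. rewrite (Ta (taui x) (taui y)), !Ti2. tauto.
  - exists tau. auto.
Qed.

Lemma iter_aut (f : V -> V) n : is_aut adj f -> is_aut adj (Nat.iter n f).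
Proof.
  intros Hf. induction n; simpl.
  - apply aut_id.
  - apply (aut_comp Hf IHn).
Qed.

Lemma tpow_aut j : is_aut adj (tpow tau taui j).
Proof. destruct j; simpl. apply aut_id. apply iter_aut; auto. apply iter_aut. apply taui_aut. Qed.

Lemma taui_bequiv (om : nat -> V) : bequiv (fun n => tau (om n)) om -> bequiv (fun n => taui (om n)) om.
Proof. intros [k [m H]]. exists m, k. intros n. rewrite <- H, Ti1. auto. Qed.

Lemma iter_bequiv (f : V -> V) (om : nat -> V) n : bequiv (fun n => f (om n)) om -> bequiv (fun i => Nat.iter n f (om i)) om.
Proof.
  intros H. induction n; simpl.
  - apply bequiv_refl.
  - eapply bequiv_trans. apply (bequiv_map f IHn). auto.
Qed.

Lemma tpow_bequiv j (om : nat -> V) : bequiv (fun n => tau (om n)) om -> bequiv (fun i => tpow tau taui j (om i)) om.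
Proof.
  intros H. destruct j; simpl. apply bequiv_refl. apply iter_bequiv; auto. apply iter_bequiv. apply taui_bequiv; auto.
Qed.

Definition Hc (g : V -> V) := Dv o (g o) (fun m => g (om_p m)).
Definition Hmm (g : V -> V) := Dv o (g o) (fun m => g (om_m m)).

Lemma Dv_split x y z w : Dv x z w = (Dv x y w + Dv y z w)%Z.
Proof. unfold DvC. lia. Qed.

Lemma fixpt (n : V -> V) (om : nat -> V) x : is_aut adj n -> ray adj om -> bequiv (fun m => n (om m)) om -> Dv x (n x) om = 0%Z ->
  exists v, n v = v.
Proof.
  intros Hn Hom Hb HD. destruct Hb as [k [m H]].
  assert (E1 : Dv (om k) (n (om k)) om = (Z.of_nat m - Z.of_nat k)%Z).
  { specialize (H 0%nat). simpl in H. rewrite H. unfold DvC. rewrite (Ev_ray Htree k Hom), (Ev_ray Htree m Hom). lia. }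
  assert (E2 : Dv (om k) (n (om k)) om = 0%Z).
  { rewrite (Dv_split (om k) x), (Dv_split x (n x)), HD.
    assert (Hb' : bequiv om (fun m => n (om m))). { apply bequiv_sym. exists k, m. auto. }
    rewrite <- (Dv_bequiv Htree (n x) (n (om k)) Hom Hb').
    rewrite (Dv_aut Htree x (om k) Hn Hom). unfold DvC. lia. }
  exists (om k). specialize (H 0%nat). simpl in H. rewrite H. f_equal. lia.
Qed.

Lemma decomp_unique g k n j : is_aut adj k -> k o = o -> is_aut adj n -> bequiv (fun m => n (om_p m)) om_p ->
  (exists x, n x = x) -> (forall x, g x = k (n (tpow tau taui j x))) -> j = Hc g.
Proof.
  intros Hk Ko Hn Bn [v Hv] Hg. unfold Hc.
  assert (Eg : g = fun x => k (n (tpow tau taui j x))) by (apply functional_extensionality; auto).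
  subst g. rewrite tpow_o.
  set (X := fun m => n (tpow tau taui j (om_p m))).
  assert (RX : ray adj X). { apply aut_ray; auto. apply aut_ray. apply tpow_aut. auto. }
  rewrite <- Ko at 1. change (fun m => k (n (tpow tau taui j (om_p m)))) with (fun m => k (X m)).
  rewrite (Dv_aut Htree o (n (gam j)) Hk RX).
  assert (BX : bequiv om_p X).
  { apply bequiv_sym. unfold X. eapply bequiv_trans. apply (bequiv_map n). apply tpow_bequiv. apply TP. auto. }
  rewrite (Dv_bequiv Htree o (n (gam j)) Hp BX).
  rewrite (Dv_split o v).
  assert (Bn' : bequiv om_p (fun m => n (om_p m))) by (apply bequiv_sym; auto).
  rewrite <- (Dv_bequiv Htree v (n (gam j)) Hp Bn').
  assert (E : Dv v (n (gam j)) (fun m => n (om_p m)) = Dv v (gam j) om_p).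
  { rewrite <- (Dv_aut Htree v (gam j) Hn Hp). rewrite Hv. auto. }
  rewrite E. rewrite <- Dv_split. rewrite <- G0, Dv_P. lia.
Qed.

Lemma decomp_exists g : is_aut adj g -> exists k n, is_aut adj k /\ k o = o /\
    is_aut adj n /\ bequiv (fun m => n (om_p m)) om_p /\ (exists x, n x = x) /\
    forall x, g x = k (n (tpow tau taui (Hc g) x)).
Proof.
  intros Hg. set (j := Hc g).
  destruct (ray_exists Htree o Hp) as [u [Hu [U0 [k1 [m1 Hum]]]]].
  assert (Bu : bequiv u om_p). { exists k1, m1. intros n. rewrite Nat.add_comm, Hum. f_equal. lia. }
  assert (Rg : ray adj (fun m => g (om_p m))) by (apply aut_ray; auto).
  destruct (ray_exists Htree o Rg) as [w [Hw [W0 [k2 [m2 Hwm]]]]].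
  assert (Bw : bequiv w (fun m => g (om_p m))). { exists k2, m2. intros n. rewrite Nat.add_comm, Hwm. f_equal. f_equal. lia. }
  destruct (K_exists Htree Hreg Hu Hw U0 W0) as [kk [Hkk [Ko Kuw]]].
  destruct (aut_inv Hkk) as [ki [Hki [Ki1 Ki2]]].
  exists kk, (fun x => ki (g (tpow tau taui (- j) x))).
  assert (B1 : bequiv (fun m => kk (om_p m)) (fun m => g (om_p m))).
  { eapply bequiv_trans. apply (bequiv_map kk). apply bequiv_sym. apply Bu.
    replace (fun n => kk (u n)) with w. auto. apply functional_extensionality. intros; auto. }
  assert (B2 : bequiv (fun m => g (tpow tau taui (- j) (om_p m))) (fun m => g (om_p m))).
  { apply (bequiv_map g). apply tpow_bequiv. auto. }
  split; auto. split; auto. split; [|split; [|split]].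
  - apply aut_comp; auto. apply aut_comp; auto. apply tpow_aut.
  - apply bequiv_trans with (fun m => ki (kk (om_p m))); [| exists 0, 0; intros; apply Ki1].
    apply (bequiv_map ki). eapply bequiv_trans. apply B2. apply bequiv_sym. auto.
  - apply (fixpt _ om_p o).
    + apply aut_comp; auto. apply aut_comp; auto. apply tpow_aut.
    + auto.
    + apply bequiv_trans with (fun m => ki (kk (om_p m))); [| exists 0, 0; intros; apply Ki1].
      apply (bequiv_map ki). eapply bequiv_trans. apply B2. apply bequiv_sym. auto.
    + rewrite tpow_o. rewrite <- (Dv_aut Htree o (ki (g (gam (- j)))) Hkk Hp).
      rewrite Ko, Ki2. rewrite (Dv_bequiv Htree o (g (gam (- j))) Rg (bequiv_sym B1)).
      rewrite (Dv_split o (g o)).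
      assert (E : Dv (g o) (g (gam (- j))) (fun m => g (om_p m)) = (- j)%Z).
      { rewrite <- G0. rewrite (Dv_aut Htree (gam 0%Z) (gam (-j)) Hg Hp). rewrite Dv_P. lia. }
      rewrite E. change (Dv o (g o) (fun m => g (om_p m))) with (Hc g). fold j. lia.
  - intros x. rewrite Ki2. rewrite tpow_inv. auto.
Qed.

Lemma Hproj_Hc g : is_aut adj g -> Hproj adj o om_p tau taui g = Hc g.
Proof.
  intros Hg. unfold Hproj.
  set (P := fun j => exists k n, is_aut adj k /\ k o = o /\ is_aut adj n /\ bequiv (fun m => n (om_p m)) om_p /\
      (exists x, n x = x) /\ forall x, g x = k (n (tpow tau taui j x))).
  assert (HP : P (epsilon (inhabits 0%Z) P)).
  { apply epsilon_spec. exists (Hc g). apply decomp_exists; auto. }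
  destruct HP as [k [n [H1 [H2 [H3 [H4 [H5 H6]]]]]]].
  exact (decomp_unique g k n _ H1 H2 H3 H4 H5 H6).
Qed.

Lemma r_gam j : r (gam j) = gam (- j)%Z.
Proof. pose proof (Rt j o) as H. rewrite Ro, !tpow_o in H. auto. Qed.

Lemma r_bequiv : bequiv (fun m => r (om_p m)) om_m.
Proof.
  apply bequiv_trans with (fun n => r (gam (Z.of_nat n))).
  - apply (bequiv_map r). apply bequiv_sym. apply BP.
  - apply bequiv_trans with (fun n => gam (- Z.of_nat n)%Z); auto.
    exists 0, 0. intros. apply r_gam.
Qed.

Lemma Hc_comp g' g : is_aut adj g' -> is_aut adj g ->
  Hc (fun x => g' (g x)) = (busemann adj o (g' o) (fun m => g' (g (om_p m))) + Hc g)%Z.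
Proof.
  intros Hg' Hg. assert (Rg : ray adj (fun m => g (om_p m))) by (apply aut_ray; auto).
  unfold Hc. rewrite (busemann_Ev Htree o (g' o)) by (apply (aut_ray Hg' Rg)).
  rewrite (Dv_split o (g' o)). f_equal. apply (Dv_aut Htree o (g o) Hg' Rg).
Qed.

Lemma Hmm_comp g' g : is_aut adj g' -> is_aut adj g ->
  Hmm (fun x => g' (g x)) = (busemann adj o (g' o) (fun m => g' (g (om_m m))) + Hmm g)%Z.
Proof.
  intros Hg' Hg. assert (Rg : ray adj (fun m => g (om_m m))) by (apply aut_ray; auto).
  unfold Hmm. rewrite (busemann_Ev Htree o (g' o)) by (apply (aut_ray Hg' Rg)).
  rewrite (Dv_split o (g' o)). f_equal. apply (Dv_aut Htree o (g o) Hg' Rg).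
Qed.

Lemma Hc_r g : is_aut adj g -> Hc (fun x => g (r x)) = Hmm g.
Proof.
  intros Hg. unfold Hc, Hmm. rewrite Ro.
  apply (Dv_bequiv Htree o (g o) (aut_ray Hg Hm)). apply (bequiv_map g). apply bequiv_sym. apply r_bequiv.
Qed.

Lemma Hc_tau g n : is_aut adj g -> Hc (fun x => g (tpow tau taui n x)) = (Hc g + n)%Z.
Proof.
  intros Hg. unfold Hc. rewrite tpow_o.
  rewrite (Dv_bequiv Htree o (g (gam n)) (aut_ray Hg Hp)).
  2:{ apply (bequiv_map g). apply bequiv_sym. apply tpow_bequiv. auto. }
  rewrite (Dv_split o (g o)).
  assert (E : Dv (g o) (g (gam n)) (fun m => g (om_p m)) = n).
  { rewrite <- G0. rewrite (Dv_aut Htree (gam 0%Z) (gam n) Hg Hp). rewrite Dv_P. lia. }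
  rewrite E. auto.
Qed.

Lemma Hc_tau_r g n : is_aut adj g -> Hc (fun x => g (tpow tau taui n (r x))) = (Hmm g - n)%Z.
Proof.
  intros Hg. unfold Hc, Hmm. rewrite Ro, tpow_o.
  rewrite (Dv_bequiv Htree o (g (gam n)) (aut_ray Hg Hm)).
  2:{ apply (bequiv_map g). apply bequiv_sym. eapply bequiv_trans.
      apply (bequiv_map (tpow tau taui n)). apply r_bequiv. apply tpow_bequiv. auto. }
  rewrite (Dv_split o (g o)).
  assert (E : Dv (g o) (g (gam n)) (fun m => g (om_m m)) = (- n)%Z).
  { rewrite <- G0. rewrite (Dv_aut Htree (gam 0%Z) (gam n) Hg Hm). rewrite Dv_M. lia. }
  rewrite E. lia.
Qed.

Lemma main_sec (s s' : C) (g g' : V -> V) (n : Z) : is_aut adj g -> is_aut adj g' ->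
  dss adj q o om_p tau taui r s s' (fun x => g' (g x)) =
    Cmult (Cmult (qpow (INR q) (half_is s) (busemann adj o (g' o) (fun m => g' (g (om_p m)))))
                 (qpow (INR q) (half_is s') (busemann adj o (g' o) (fun m => g' (g (om_m m))))))
          (dss adj q o om_p tau taui r s s' g)
  /\
  dss adj q o om_p tau taui r s s' (fun x => g (tpow tau taui n x)) =
    Cmult (Cmult (qpow (INR q) (half_is s) n) (qpow (INR q) (half_is s') (- n)))
          (dss adj q o om_p tau taui r s s' g).
Proof.
  intros Hg Hg'.
  assert (Agr : is_aut adj (fun x => g (r x))) by (apply aut_comp; auto).
  assert (Agg : is_aut adj (fun x => g' (g x))) by (apply aut_comp; auto).
  assert (Aggr : is_aut adj (fun x => g' (g (r x)))) by (apply aut_comp; auto).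
  assert (Agt : is_aut adj (fun x => g (tpow tau taui n x))) by (apply aut_comp; auto; apply tpow_aut).
  assert (Agtr : is_aut adj (fun x => g (tpow tau taui n (r x)))) by (apply aut_comp; auto; apply aut_comp; auto; apply tpow_aut).
  unfold dss. cbv beta.
  rewrite (Hproj_Hc _ Hg), (Hproj_Hc _ Agr), (Hproj_Hc _ Agg), (Hproj_Hc _ Aggr), (Hproj_Hc _ Agt), (Hproj_Hc _ Agtr).
  assert (E1 : Hc (fun x => g' (g (r x))) = Hmm (fun x => g' (g x))) by (apply (Hc_r (fun x => g' (g x))); auto).
  rewrite E1, (Hc_r g Hg), (Hc_comp g' g Hg' Hg), (Hmm_comp g' g Hg' Hg), (Hc_tau g n Hg), (Hc_tau_r g n Hg).
  split.
  - rewrite !qpow_add. ring.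
  - replace (Hmm g - n)%Z with (Hmm g + - n)%Z by lia. rewrite !qpow_add. ring.
Qed.

End Main.

Theorem lemma3p2 (V : Type) (adj : V -> V -> Prop) (q : nat) (o : V)
  (om_m om_p : nat -> V) (gam : Z -> V) (tau taui r : V -> V) :
  (2 <= q)%nat ->
  is_tree adj -> regular adj (S q) ->
  ray adj om_m -> ray adj om_p -> ~ bequiv om_m om_p ->
  (* o lies on the geodesic ]om_m, om_p[ , parametrized by gam with gam 0 = o *)
  geodesic adj gam -> gam 0%Z = o ->
  bequiv (fun n => gam (Z.of_nat n)) om_p ->
  bequiv (fun n => gam (- Z.of_nat n)%Z) om_m ->
  (* tau : automorphism fixing om_pm, translating the geodesic one step to om_p *)
  is_aut adj tau -> (forall x, taui (tau x) = x) -> (forall x, tau (taui x) = x) ->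
  bequiv (fun n => tau (om_p n)) om_p -> bequiv (fun n => tau (om_m n)) om_m ->
  (forall n, tau (gam n) = gam (n + 1)%Z) ->
  (* r in K, r^2 = id, r tau^j r^-1 = tau^-j *)
  is_aut adj r -> r o = o -> (forall x, r (r x) = x) ->
  (forall j x, r (tpow tau taui j (r x)) = tpow tau taui (- j) x) ->
  forall (s s' : C) (g g' : V -> V) (n : Z),
  is_aut adj g -> is_aut adj g' ->
  dss adj q o om_p tau taui r s s' (fun x => g' (g x)) =
    Cmult (Cmult (qpow (INR q) (half_is s) (busemann adj o (g' o) (fun m => g' (g (om_p m)))))
                 (qpow (INR q) (half_is s') (busemann adj o (g' o) (fun m => g' (g (om_m m))))))
          (dss adj q o om_p tau taui r s s' g)
  /\
  dss adj q o om_p tau taui r s s' (fun x => g (tpow tau taui n x)) =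
    Cmult (Cmult (qpow (INR q) (half_is s) n) (qpow (INR q) (half_is s') (- n)))
          (dss adj q o om_p tau taui r s s' g).

Proof.
  intros. eapply main_sec; eauto.
Qed.
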